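(* Let $R$ be a $p$-adically complete ring, $a\in R$, $M$ a $p$-complete $R$-module and $\{\phi_n\}_{n\ge0}\subset\mathrm{End}_R(M)$ with $\phi_0=\mathrm{id}_M$. Then the following are equivalent: (1) for every $n\ge0$, $\displaystyle \phi_n=\sum_{l,m\ge0}\phi_m\circ\phi_{l+n}\,(1+aX)^{-l-n}(-1)^lX^{[l]}X^{[m]}$; (2) for every $n\ge1$, $\displaystyle \phi_n=\prod_{i=0}^{n-1}(\phi_1-ia)$.
   Context: The identity in (1) is an identity of formal divided-power series in one variable $X$ with coefficients in $\mathrm{End}_R(M)$: one expands $(1+aX)^{-N}=\sum_j\binom{-N}{j}a^jX^j$, uses $X^{[m]}=X^m/m!$, and compares the coefficients of $X^{[k]}$ for each $k\ge0$ (each such coefficient is a finite $\mathbb Z$-linear combination of products of the $\phi$'s and powers of $a$); the left side is the constant series $\phi_n$. *)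

(* Defs.v *)
From HB Require Import structures.
From mathcomp Require Import all_boot all_order all_algebra.
Set Implicit Arguments. Unset Strict Implicit. Unset Printing Implicit Defensive.
Import Order.TTheory GRing.Theory Num.Theory.
Local Open Scope ring_scope.

Definition pdivisible (M : zmodType) (p n : nat) (x : M) : Prop :=
  exists y : M, x = y *+ (p ^ n)%N.

(* Classical p-adic completeness: M is p-adically separated and complete,
   i.e. M -> lim_n M / p^n M is an isomorphism. *)
Definition p_complete (M : zmodType) (p : nat) : Prop :=
  (forall x : M, (forall n, pdivisible p n x) -> x = 0) /\
  (forall u : nat -> M, (forall n, pdivisible p n (u n.+1 - u n)) ->
     exists x : M, forall n, pdivisible p n (x - u n)).

(* Coefficient of X^{[j]} in the divided power expansion of (1 + aX)^{-N}:
   j! * binom(-N, j) * a^j = (-1)^j * N(N+1)...(N+j-1) * a^j. *)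
Definition invpow_dpcoef (R : comPzRingType) (a : R) (N j : nat) : R :=
  (-1) ^+ j * (\prod_(i < j) (N + i))%N%:R * a ^+ j.

(* Coefficient of X^{[k]} of the right-hand side of identity (1), applied to x:
   sum over l + m + j = k of the multinomial k!/(l! m! j!) (from
   X^{[l]} X^{[m]} X^{[j]} = (l+m+j)!/(l! m! j!) X^{[l+m+j]}) times
   (-1)^l times the X^{[j]}-coefficient of (1+aX)^{-l-n}, acting on
   phi_m (phi_(l+n) x). *)
Definition rhs1_coef (R : comPzRingType) (M : lmodType R) (a : R)
    (phi : nat -> {linear M -> M}) (n k : nat) (x : M) : M :=
  \sum_(l < k.+1) \sum_(m < (k - l).+1)
     (('C(k, l) * 'C(k - l, m))%N%:R * (-1) ^+ l
        * invpow_dpcoef a (l + n) (k - l - m))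
       *: phi m (phi (l + n)%N x).

Fixpoint falling_end (R : comPzRingType) (M : lmodType R) (f : M -> M) (a : R)
    (n : nat) : M -> M :=
  match n with
  | 0 => id
  | n'.+1 => fun x => let y := falling_end f a n' x in f y - (n'%:R * a) *: y
  end.

(* Main.v *)
Require Import Defs.
From HB Require Import structures.
From mathcomp Require Import all_boot all_order all_algebra.
From mathcomp Require Import ring zify.
Import Order.TTheory GRing.Theory Num.Theory.
Local Open Scope ring_scope.
Set Implicit Arguments. Unset Strict Implicit.

Definition Bc (M : nmodType) (k : nat) (g : nat -> nat -> M) : M :=
  \sum_(i < k.+1) g i (k - i)%N *+ 'C(k, i).

Lemma Bc_leib (M : nmodType) k (g : nat -> nat -> M) :
  Bc k.+1 g = Bc k (fun i r => g i.+1 r + g i r.+1).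
Proof.
rewrite /Bc big_ord_recl /=.
under eq_bigr => i _ do rewrite /bump /= add1n subSS binS mulrnDr.
rewrite big_split /= addrA.
under [in RHS]eq_bigr => i _ do rewrite mulrnDl.
rewrite [in RHS]big_split /= [in RHS]addrC; congr (_ + _).
rewrite bin0 big_ord_recr /= bin_small // mulr0n addr0 addrC.
rewrite [in RHS]big_ord_recl /= bin0 subn0 addrC; congr (_ + _).
  by rewrite subn0.
apply: eq_bigr => i _; rewrite /bump /= add1n subnSK //.
Qed.

Lemma Bc_ext (M : nmodType) r (g h : nat -> nat -> M) :
  (forall i j, (i + j)%N = r -> g i j = h i j) -> Bc r g = Bc r h.
Proof.
move=> H; apply: eq_bigr => i _; rewrite H //.
by rewrite subnKC // -ltnS ltn_ord.
Qed.

Lemma Bc_add (M : nmodType) r (g h : nat -> nat -> M) :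
  Bc r (fun i j => g i j + h i j) = Bc r g + Bc r h.
Proof. by rewrite /Bc -big_split /=; apply: eq_bigr => i _; rewrite mulrnDl. Qed.

Lemma Bc_opp (M : zmodType) r (g : nat -> nat -> M) :
  Bc r (fun i j => - g i j) = - Bc r g.
Proof. by rewrite /Bc -sumrN; apply: eq_bigr => i _; rewrite mulNrn. Qed.

Lemma Bc_scale (R : pzRingType) (M : lmodType R) r c (g : nat -> nat -> M) :
  Bc r (fun i j => c *: g i j) = c *: Bc r g.
Proof. by rewrite /Bc scaler_sumr; apply: eq_bigr => i _; rewrite scalerMnr. Qed.

Lemma Bc_lin (R : pzRingType) (M : lmodType R) (f : {linear M -> M}) r
   (g : nat -> nat -> M) :
  Bc r (fun i j => f (g i j)) = f (Bc r g).
Proof. by rewrite /Bc linear_sum; apply: eq_bigr => i _; rewrite raddfMn. Qed.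

Lemma Bc_comb (R : pzRingType) (M : lmodType R) (f : {linear M -> M}) r c
   (g h : nat -> nat -> M) :
  Bc r (fun i j => f (g i j) - c *: g i j - h i j) =
  f (Bc r g) - c *: Bc r g - Bc r h.
Proof. by rewrite !Bc_add !Bc_opp Bc_scale Bc_lin. Qed.

Lemma Bc0 (M : nmodType) (g : nat -> nat -> M) : Bc 0 g = g 0%N 0%N.
Proof. by rewrite /Bc big_ord1 /=. Qed.

Section Main.
Variables (R : comPzRingType) (a : R) (M : lmodType R)
  (phi : nat -> {linear M -> M}) (h0 : forall x : M, phi 0%N x = x).

Definition wt n x l m j : M :=
  ((-1) ^+ l * invpow_dpcoef a (l + n) j) *: phi m (phi (l + n)%N x).

Lemma rhs_eq n k x :
  rhs1_coef a phi n k x = Bc k (fun l r => Bc r (fun m j => wt n x l m j)).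
Proof.
rewrite /rhs1_coef /Bc; apply: eq_bigr => l _.
rewrite -sumrMnl; apply: eq_bigr => m _.
rewrite /wt -mulrnA scalerMnl -mulrA mulr_natl mulnC.
by rewrite -subnDA.
Qed.

Lemma c_succ N j :
  invpow_dpcoef a N j.+1 = - (((N + j)%:R * a) * invpow_dpcoef a N j).
Proof.
rewrite /invpow_dpcoef big_ord_recr /= natrM !exprS; ring.
Qed.

Hypothesis H2 : forall m x, phi m.+1 x = phi 1%N (phi m x) - (m%:R * a) *: phi m x.

Lemma rec n k x :
  rhs1_coef a phi n k.+1 x =
  phi 1%N (rhs1_coef a phi n k x) - ((k + n)%:R * a) *: rhs1_coef a phi n k x
   - rhs1_coef a phi n.+1 k x.
Proof.
rewrite !rhs_eq Bc_leib -Bc_comb.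
apply: Bc_ext => l r Hlr.
rewrite -Bc_comb Bc_leib -Bc_add.
apply: Bc_ext => m j Hmj.
rewrite /wt H2 c_succ addSnnS !linearZ /=.
have -> : (k + n = (l + n) + j + m)%N by lia.
set v := phi m _; set w := phi m _; set pv := phi 1 v.
set c0 := invpow_dpcoef _ _ _; set c1 := invpow_dpcoef _ _ _.
rewrite exprS scalerDr !scalerN !scalerA -!scaleNr -[_ + _ *: w + _]addrA -scalerDl [RHS]addrC.
congr (_ *: _ + (_ + _ *: _)); rewrite ?natrD; ring.
Qed.

Lemma all_zero x k n :
  rhs1_coef a phi n k x = if k == 0%N then phi n x else 0.
Proof.
elim: k n => [|k IH] n.
  by rewrite rhs_eq !Bc0 /wt /invpow_dpcoef big_ord0 !expr0 !mul1r scale1r h0 add0n.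
rewrite rec !IH; case: k IH => [|k] IH /=.
  by rewrite (H2 n) add0n subrr.
by rewrite linear0 scaler0 !subr0.
Qed.
End Main.

Lemma k1 (R : comPzRingType) (a : R) (M : lmodType R)
  (phi : nat -> {linear M -> M}) (h0 : forall x : M, phi 0%N x = x) n x :
  rhs1_coef a phi n 1 x = phi 1%N (phi n x) - (n%:R * a) *: phi n x - phi n.+1 x.
Proof.
rewrite rhs_eq Bc_leib Bc0 Bc0 Bc_leib Bc0 /wt.
have i0 : forall N, invpow_dpcoef a N 0 = 1.
  by move=> N; rewrite /invpow_dpcoef big_ord0 !expr0 !mul1r.
rewrite c_succ !i0 !h0 !expr0 expr1 !mul1r !mulr1 !add0n !addn0 add1n scale1r.
by rewrite scaleN1r scaleNr addrC.
Qed.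

Theorem mainTheorem5 (p : nat) (hp : prime p) (R : comPzRingType)
  (hR : p_complete R p) (a : R) (M : lmodType R) (hM : p_complete M p)
  (phi : nat -> {linear M -> M}) (h0 : forall x : M, phi 0%N x = x) :
  (forall (n k : nat) (x : M),
      rhs1_coef a phi n k x = (if k == 0%N then phi n x else 0)) <->
  (forall n : nat, (1 <= n)%N -> forall x : M,
      phi n x = falling_end (phi 1%N) a n x).
Proof.
split.
  move=> H1.
  have S : forall n x, phi n.+1 x = phi 1%N (phi n x) - (n%:R * a) *: phi n x.
    move=> n x; apply/eqP; rewrite eq_sym -subr_eq0 -k1 // H1 //.
  have A : forall n x, phi n x = falling_end (phi 1%N) a n x.
    elim=> [|n IH] x; first by rewrite h0.
    by rewrite S /= -IH.
  by move=> n _ x; exact: A.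
move=> H2.
have A : forall n x, phi n x = falling_end (phi 1%N) a n x.
  case=> [|n] x; first by rewrite h0.
  exact: (H2 n.+1 isT).
have S : forall n x, phi n.+1 x = phi 1%N (phi n x) - (n%:R * a) *: phi n x.
  by move=> n x; rewrite (A n.+1) (A n).
move=> n k x; exact: (all_zero h0 S x k n).
Qed.
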